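(* Let $G$ be a vertex-transitive graph and let $\{W_v\}_{v\in V(G)}$ be subspaces of $\mathbb{C}^d$ such that distinct non-adjacent vertices receive orthogonal subspaces. Then $\sum_{v\in V(G)}\dim W_v\le \dfrac{d\cdot|V(G)|}{\overline{\xi_f}(G)}$.
   Context: For a graph $G$, the complement of the projective rank $\overline{\xi_f}(G)$ is the infimum of $d/r$ over all $d,r\in\mathbb{N}$ for which there is an assignment of $r$-dimensional subspaces $W_v\le\mathbb{C}^d$ to the vertices $v$ of $G$ such that distinct non-adjacent vertices receive orthogonal subspaces. *)

(* Defs.v *)
From HB Require Import structures.
From mathcomp Require Import all_boot all_order all_algebra all_fingroup.
From mathcomp Require Import classical_sets reals.
From mathcomp.real_closed Require Import complex.
Set Implicit Arguments.
Unset Strict Implicit.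
Unset Printing Implicit Defensive.
Import Order.TTheory GRing.Theory Num.Theory.
Local Open Scope ring_scope.

Definition simple_graph (T : finType) (e : rel T) : Prop :=
  symmetric e /\ irreflexive e.

Definition is_graph_aut (T : finType) (e : rel T) (f : {perm T}) : Prop :=
  forall x y, e (f x) (f y) = e x y.

Definition vertex_transitive (T : finType) (e : rel T) : Prop :=
  forall x y : T, exists f : {perm T}, is_graph_aut e f /\ f x = y.

(* Subspaces of C^d (C = R[i]) are represented as row spaces of square
   d x d matrices; the dimension of the subspace is the rank.
   Two subspaces (row spaces of A and B) are orthogonal w.r.t. the standard
   Hermitian inner product <u,w> = sum_i u_i conj(w_i) iff A * conj(B)^T = 0. *)
Definition mx_orth (R : rcfType) (d : nat) (A B : 'M[R[i]]_d) : Prop :=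
  A *m (map_mx (@conjc R) B)^T = 0.

Definition orth_assignment (R : rcfType) (T : finType) (e : rel T) (d : nat)
    (W : T -> 'M[R[i]]_d) : Prop :=
  forall u v : T, u != v -> ~~ e u v -> mx_orth (W u) (W v).

Definition xi_bar_ratios (R : realType) (T : finType) (e : rel T) : set R :=
  [set x | exists (d r : nat) (W : T -> 'M[R[i]]_d),
     (0 < r)%N /\ (forall v, \rank (W v) = r) /\ orth_assignment e W /\
     x = d%:R / r%:R].

Definition xi_bar_f (R : realType) (T : finType) (e : rel T) : R :=
  inf (xi_bar_ratios e).

(* Main.v *)
Require Import Defs.
From HB Require Import structures.
From mathcomp Require Import all_boot all_order all_algebra all_fingroup.
From mathcomp Require Import boolp classical_sets reals.
From mathcomp.real_closed Require Import complex.
Import Order.TTheory GRing.Theory Num.Theory.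
Local Open Scope ring_scope.

Section BD.
Variables (C : fieldType) (X : eqType) (d : nat).

Fixpoint dd (n : nat) : nat := if n is n'.+1 then (d + dd n')%N else 0%N.

Lemma ddE n : dd n = (n * d)%N.
Proof. by elim: n => //= n ->; rewrite mulSn. Qed.

Fixpoint bd (M : X -> 'M[C]_d) (s : seq X) : 'M[C]_(dd (size s)) :=
  match s with [::] => 0 | x :: s' => block_mx (M x) 0 0 (bd M s') end.

Lemma rank_bd M s : \rank (bd M s) = (\sum_(x <- s) \rank (M x))%N.
Proof.
elim: s => [|x s IH] /=; first by rewrite big_nil mxrank0.
by rewrite big_cons rank_diag_block_mx IH.
Qed.

Lemma bd_orth (f : {rmorphism C -> C}) (M1 M2 : X -> 'M[C]_d) s :
  (forall x, x \in s -> M1 x *m (map_mx f (M2 x))^T = 0) ->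
  bd M1 s *m (map_mx f (bd M2 s))^T = 0.
Proof.
elim: s => [|x s IH] /= H; first by rewrite mul0mx.
rewrite map_block_mx tr_block_mx !map_mx0 !trmx0 mulmx_block.
rewrite H ?mem_head // IH; last by move=> y ys; apply: H; rewrite in_cons ys orbT.
by rewrite !mulmx0 !mul0mx !addr0 block_mx0.
Qed.
End BD.
From mathcomp Require Import zify.

Theorem corollary15 (R : realType) (T : finType) (e : rel T)
    (Hsimple : simple_graph e) (Hvt : vertex_transitive e)
    (d : nat) (W : T -> 'M[R[i]]_d) (HW : orth_assignment e W) :
  (\sum_(v : T) (\rank (W v))%:R : R) <= (d * #|T|)%:R / xi_bar_f R e.
Proof.
rewrite -natr_sum.
set SN := (\sum_v \rank (W v))%N.
pose E := xi_bar_ratios (R:=R) e.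
have lb0 : forall x, E x -> 0 <= x.
  by move=> x [d' [r' [W' [_ [_ [_ ->]]]]]]; rewrite divr_ge0.
have xi0 : 0 <= xi_bar_f R e.
  rewrite /xi_bar_f -/E.
  case: (pselect (E !=set0)%classic) => [ne|ne]; first by apply: lb_le_inf => //; apply/lbP.
  have -> : E = set0.
    by apply/seteqP; split=> x // Ex; exfalso; apply: ne; exists x.
  by rewrite inf0.
have [SN0|SNpos] := eqVneq SN 0%N.
  by rewrite SN0 divr_ge0.
case: (pickP (@predT T)) => [v0 _|none]; last first.
  by move: SNpos; rewrite /SN big_pred0.
pose autb : pred {perm T} := fun f => [forall x, forall y, e (f x) (f y) == e x y].
have autP f : reflect (is_graph_aut e f) (autb f).
  apply: (iffP forallP) => [H x y|H x]; first by move: (H x) => /forallP /(_ y) /eqP.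
  by apply/forallP => y; rewrite H.
have autM f g : autb f -> autb g -> autb (f * g)%g.
  move=> /autP Hf /autP Hg; apply/autP => x y; by rewrite !permM Hg Hf.
have autV f : autb f -> autb f^-1%g.
  move=> /autP Hf; apply/autP => x y; by rewrite -Hf !permKV.
pose rv v := (\sum_(f | autb f) \rank (W (f v)))%N.
have rconst v : rv v = rv v0.
  have [g [/autP Hg <-]] := Hvt v0 v.
  rewrite /rv [in RHS](reindex_inj (mulgI g)) /=.
  apply: eq_big => [f|f _]; last by rewrite permM.
  apply/idP/idP => [Hf|Hgf]; first exact: autM.
  by rewrite -(mulKg g f); apply: autM => //; apply: autV.
set N := #|autb|.
have tot : (#|T| * rv v0 = N * SN)%N.
  transitivity (\sum_v rv v)%N.
    by rewrite (eq_bigr (fun _ => rv v0)) ?sum_nat_const // => v _; rewrite rconst.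
  rewrite /rv exchange_big /=.
  rewrite (eq_bigr (fun _ => SN)); first by rewrite sum_nat_const.
  by move=> f _; rewrite /SN [in RHS](reindex_inj (@perm_inj _ f)).
have N0 : (0 < N)%N.
  by apply/card_gt0P; exists 1%g; apply/autP => x y; rewrite !perm1.
have r0 : (0 < rv v0)%N.
  rewrite lt0n; apply/eqP => r0; move: tot; rewrite r0 muln0 => /esym/eqP.
  by rewrite muln_eq0 (negbTE SNpos) orbF => /eqP N00; rewrite N00 in N0.
pose W' v := @bd _ _ d (fun f : {perm T} => W (f v)) (enum autb).
have rW' v : \rank (W' v) = rv v0.
  by rewrite rank_bd big_enum -(rconst v); apply: eq_bigl => f.
have oW' : orth_assignment e W'.
  move=> u v uv euv; apply: bd_orth => f; rewrite mem_enum => /autP Hf.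
  apply: HW; last by rewrite Hf.
  by apply: contra uv => /eqP/perm_inj ->.
have EW' : E ((dd d (size (enum autb)))%:R / (rv v0)%:R).
  by exists (dd d (size (enum autb))), (rv v0), W'.
have xi1 : 1 <= xi_bar_f R e.
  apply: lb_le_inf; first by eexists; exact: EW'.
  move=> x [d' [r' [W1 [r'0 [rk [_ ->]]]]]].
  rewrite ler_pdivlMr ?ltr0n // mul1r ler_nat -(rk v0); exact: rank_leq_col.
have xile : xi_bar_f R e <= (d * #|T|)%:R / SN%:R.
  have -> : (d * #|T|)%:R / SN%:R = (dd d (size (enum autb)))%:R / (rv v0)%:R :> R.
    apply/eqP; rewrite eqr_div ?pnatr_eq0 ?SNpos -?lt0n ?r0 //.
    rewrite -!natrM eqr_nat ddE -cardE -/N; apply/eqP; nia.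
  have hl : has_lbound E by exists 0; apply/lbP.
  exact: (ge_inf hl EW').
have xipos : 0 < xi_bar_f R e by apply: lt_le_trans xi1.
rewrite ler_pdivlMr // mulrC -ler_pdivlMr ?ltr0n ?lt0n //.
Qed.
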